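(* Let $X$ be convex and let $f$ be $\alpha$-robustly quasiconvex for some $\alpha>0$, with $X\subset\operatorname{dom}f$. If $X^\infty\cap\mathcal{K}_q(f)=\{0\}$, then there exists $\varepsilon>0$ such that for all $u\in\mathbb{B}_\varepsilon$: (a) $f_u$ is bounded from below on $X$; (b) $\mathrm{Sol}(u)$ is nonempty and compact. Moreover, (c) $\operatorname{Lim\,sup}_{u\to0}\mathrm{Sol}(u)\subset\mathrm{Sol}(0)$ and (d) $\mathrm{Sol}(\cdot)$ is upper semicontinuous at $0$.
   Context: Standing assumptions: $f:\mathbb{R}^n\to\mathbb{R}\cup\{\pm\infty\}$ is proper (never $-\infty$ and finite at some point) and lower semicontinuous; $X\subset\mathbb{R}^n$ is a nonempty closed set with $\operatorname{dom}f\cap X$ unbounded. $f$ is $\alpha$-robustly quasiconvex ($\alpha\ge0$) if $x\mapsto f(x)+\langle u,x\rangle$ is quasiconvex for every $u\in\mathbb{B}_\alpha$, where $g$ quasiconvex means $g(\lambda x+(1-\lambda)y)\le\max\{g(x),g(y)\}$ for $x,y\in\operatorname{dom}g$, $\lambda\in[0,1]$; $\mathbb{B}_\alpha$ is the open ball of radius $\alpha$ centered at $0$. $X^\infty=\{u:\exists t_k\to+\infty,\ \exists x_k\in X,\ x_k/t_k\to u\}$. $f^\infty_q(u)=\sup_{x\in\operatorname{dom}f}\sup_{t>0}\frac{f(x+tu)-f(x)}{t}$, $\mathcal{K}_q(f)=\{d: f^\infty_q(d)\le0\}$. $f_u(x)=f(x)-\langle u,x\rangle$, $\mathrm{Sol}(u)=\{x\in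 X: f_u(x)\le f_u(y)\ \forall y\in X\}$. $\operatorname{Lim\,sup}_{u\to0}\mathrm{Sol}(u)$ is the set of $\bar x$ for which there exist $u_k\to0$, $x_k\in\mathrm{Sol}(u_k)$, $x_k\to\bar x$. A set-valued map $F$ is upper semicontinuous at $\bar u$ if for every open $V\supset F(\bar u)$ there is a neighborhood $U$ of $\bar u$ with $F(u)\subset V$ for all $u\in U$. *)

(* Defs.v *)
From HB Require Import structures.
From mathcomp Require Import all_boot all_order all_algebra.
From mathcomp Require Import all_classical all_reals all_analysis.
Set Implicit Arguments. Unset Strict Implicit. Unset Printing Implicit Defensive.
Import Order.TTheory GRing.Theory Num.Theory.
Import numFieldNormedType.Exports.
Local Open Scope classical_set_scope.
Local Open Scope ring_scope.

Section Defs.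
Context {R : realType} {n : nat}.
Notation V := 'rV[R]_n.

Definition dotp (u x : V) : R := \sum_(i < n) u ord0 i * x ord0 i.
Definition eucnorm (x : V) : R := Num.sqrt (\sum_(i < n) x ord0 i ^+ 2).

Definition eball0 (a : R) : set V := [set u | eucnorm u < a].

Definition dom (f : V -> \bar R) : set V := [set x | (f x < +oo)%E].

Definition proper_fun (f : V -> \bar R) : Prop :=
  (forall x, f x != -oo%E) /\ (exists x, f x \is a fin_num).

Definition quasiconvex (g : V -> \bar R) : Prop :=
  forall x y (l : R), dom g x -> dom g y -> 0 <= l <= 1 ->
    (g (l *: x + (1 - l) *: y)%R <= maxe (g x) (g y))%E.

Definition robustly_quasiconvex (alpha : R) (f : V -> \bar R) : Prop :=
  forall u, eball0 alpha u -> quasiconvex (fun x => f x + (dotp u x)%:E)%E.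

Definition cvx_set (X : set V) : Prop :=
  forall x y (l : R), X x -> X y -> 0 <= l <= 1 -> X (l *: x + (1 - l) *: y).

Definition bounded_eset (A : set V) : Prop :=
  exists M : R, forall x, A x -> eucnorm x <= M.

Definition asymp_cone (X : set V) : set V :=
  [set u | exists (t : nat -> R) (x : nat -> V),
      t @ \oo --> +oo /\ (forall k, X (x k)) /\
      (fun k => (t k)^-1 *: x k) @ \oo --> u].

Definition qasymp (f : V -> \bar R) (u : V) : \bar R :=
  ereal_sup [set z | exists x t, dom f x /\ 0 < t /\
      z = ((f (x + t *: u)%R - f x) * (t^-1)%:E)%E].

Definition Kq (f : V -> \bar R) : set V := [set d | (qasymp f d <= 0)%E].

Definition fu (f : V -> \bar R) (u : V) (x : V) : \bar R :=
  (f x - (dotp u x)%:E)%E.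

Definition Sol (f : V -> \bar R) (X : set V) (u : V) : set V :=
  [set x | X x /\ forall y, X y -> (fu f u x <= fu f u y)%E].

Definition limsup_Sol0 (f : V -> \bar R) (X : set V) : set V :=
  [set xb | exists (u : nat -> V) (x : nat -> V),
      u @ \oo --> (0 : V) /\ (forall k, Sol f X (u k) (x k)) /\
      x @ \oo --> xb].

Definition usc_at (F : V -> set V) (ub : V) : Prop :=
  forall W : set V, open W -> F ub `<=` W ->
    \forall u \near ub, F u `<=` W.

End Defs.

(* Main.v *)
Require Import Defs.
From HB Require Import structures.
From mathcomp Require Import all_boot all_order all_algebra.
From mathcomp Require Import all_classical all_reals all_analysis.
Import Order.TTheory GRing.Theory Num.Theory.
Import numFieldNormedType.Exports.
Local Open Scope classical_set_scope.
Local Open Scope ring_scope.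
From mathcomp Require Import lra ring.
Set Implicit Arguments. Unset Strict Implicit. Unset Printing Implicit Defensive.
Lemma entry_le (R : realType) n (x : 'rV[R]_n) i : `|x ord0 i| <= `|x|.
Proof.
rewrite [leRHS]/Num.norm /= mx_normrE; apply/bigmax_geP; right => /=.
by exists (ord0, i).
Qed.

Lemma dotpDl (R : realType) n (u v x : 'rV[R]_n) : dotp (u + v) x = dotp u x + dotp v x.
Proof. by rewrite /dotp -big_split; apply: eq_bigr => i _; rewrite mxE mulrDl. Qed.
Lemma dotpDr (R : realType) n (u v x : 'rV[R]_n) : dotp x (u + v) = dotp x u + dotp x v.
Proof. by rewrite /dotp -big_split; apply: eq_bigr => i _; rewrite mxE mulrDr. Qed.
Lemma dotpZl (R : realType) n a (u x : 'rV[R]_n) : dotp (a *: u) x = a * dotp u x.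
Proof. by rewrite /dotp mulr_sumr; apply: eq_bigr => i _; rewrite mxE mulrA. Qed.
Lemma dotpZr (R : realType) n a (u x : 'rV[R]_n) : dotp x (a *: u) = a * dotp x u.
Proof. by rewrite /dotp mulr_sumr; apply: eq_bigr => i _; rewrite mxE mulrCA. Qed.
Lemma dotpNl (R : realType) n (u x : 'rV[R]_n) : dotp (- u) x = - dotp u x.
Proof. by rewrite -scaleN1r dotpZl mulN1r. Qed.
Lemma dotpNr (R : realType) n (u x : 'rV[R]_n) : dotp x (- u) = - dotp x u.
Proof. by rewrite -scaleN1r dotpZr mulN1r. Qed.
Lemma dotpBr (R : realType) n (u v x : 'rV[R]_n) : dotp x (u - v) = dotp x u - dotp x v.
Proof. by rewrite dotpDr dotpNr. Qed.
Lemma dotp0l (R : realType) n (x : 'rV[R]_n) : dotp 0 x = 0.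
Proof. by rewrite /dotp big1 // => i _; rewrite mxE mul0r. Qed.

Lemma dotp_le (R : realType) n (u x : 'rV[R]_n) : `|dotp u x| <= n%:R * (`|u| * `|x|).
Proof.
apply: le_trans (ler_norm_sum _ _ _) _.
have -> : n%:R * (`|u| * `|x|) = \sum_(i < n) (`|u| * `|x|).
  by rewrite sumr_const card_ord mulr_natl.
apply: ler_sum => i _.
by rewrite normrM; apply: ler_pM => //; exact: entry_le.
Qed.

Lemma sq_le_sum (R : realType) n (x : 'rV[R]_n) i :
  x ord0 i ^+ 2 <= \sum_(j < n) x ord0 j ^+ 2.
Proof.
rewrite (bigD1 i) //= lerDl; apply: sumr_ge0 => j _; exact: sqr_ge0.
Qed.

Lemma norm_le_euc (R : realType) n (u : 'rV[R]_n) : `|u| <= eucnorm u.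
Proof.
have [->|u0] := eqVneq `|u| 0; first exact: sqrtr_ge0.
have [[i j] /= Hij] := @mx_norm_neq0 _ _ _ u u0.
have -> : `|u| = `|u i j| by exact: Hij.
rewrite (ord1 i) -sqrtr_sqr /eucnorm; apply: ler_wsqrtr; exact: sq_le_sum.
Qed.

Lemma euc_lt (R : realType) n (u : 'rV[R]_n) a : 0 < a ->
  n%:R * `|u| ^+ 2 < a ^+ 2 -> eucnorm u < a.
Proof.
move=> a0 H; rewrite /eucnorm -[a in _ < a]ger0_norm ?ltW // -sqrtr_sqr.
rewrite ltr_sqrt ?exprn_gt0 //; apply: le_lt_trans H.
have -> : n%:R * `|u| ^+ 2 = \sum_(i < n) `|u| ^+ 2.
  by rewrite sumr_const card_ord mulr_natl.
apply: ler_sum => i _.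
rewrite -real_normK ?num_real //; apply: lerXn2r; rewrite ?nnegrE //.
exact: entry_le.
Qed.

Lemma dotp_self_gt0 (R : realType) n (d : 'rV[R]_n) : d != 0 -> 0 < dotp d d.
Proof.
move=> d0; rewrite lt_def; apply/andP; split; last first.
  by apply: sumr_ge0 => i _; rewrite -expr2 sqr_ge0.
apply: contra d0 => /eqP /psumr_eq0P H; apply/eqP/rowP => i.
rewrite mxE; apply/eqP; rewrite -sqrf_eq0 expr2; apply/eqP; apply: H => //.
by move=> j _; rewrite -expr2 sqr_ge0.
Qed.
Definition freq (R : realType) n (xs : nat -> 'rV[R]_n) (p : 'rV[R]_n) :=
  forall (B : set 'rV[R]_n) (K : nat), nbhs p B -> exists k, (K <= k)%N /\ B (xs k).

Lemma cluster_freq (R : realType) n (xs : nat -> 'rV[R]_n) p :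
  cluster (xs @ \oo) p -> freq xs p.
Proof.
move=> Hc B K Bp.
have [v [[k [Kk ->]] Bv]] := Hc [set v | exists k, (K <= k)%N /\ v = xs k] B
  (ltac:(by exists K => // k /= Kk; exists k)) Bp.
by exists k.
Qed.

Lemma cvg_freq (R : realType) n (xs : nat -> 'rV[R]_n) p :
  xs @ \oo --> p -> freq xs p.
Proof.
move=> Hc B K Bp.
have [N _ HN] := Hc B Bp.
exists (maxn N K); split; first exact: leq_maxr.
by apply: HN; rewrite /= leq_maxl.
Qed.

Lemma compact_clust (R : realType) n (A : set 'rV[R]_n) (w : nat -> 'rV[R]_n) :
  compact A -> (forall k, A (w k)) -> exists d, A d /\ cluster (w @ \oo) d.
Proof.
move=> cA Aw.
have FA : (w @ \oo) A by exists 0%N => // k _; exact: Aw.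
have [d [Ad Cd]] := cA (w @ \oo) _ FA.
by exists d.
Qed.

Lemma freq_subseq (R : realType) n (w : nat -> 'rV[R]_n) d :
  freq w d -> exists phi : nat -> nat, (forall j, (j <= phi j)%N) /\ (w \o phi) @ \oo --> d.
Proof.
move=> Fw.
have H : forall j, exists k, (j <= k)%N /\ ball d (j.+1%:R^-1) (w k).
  move=> j; apply: Fw; apply: nbhsx_ballx; by rewrite invr_gt0.
have [phi Hphi] := choice H.
exists phi; split; first by move=> j; case: (Hphi j).
apply/cvgrPdist_lt => e e0.
near=> j.
have := (Hphi j).2; rewrite -ball_normE /= => Hb.
apply: lt_trans Hb _.
near: j.
exact: (near_infty_natSinv_lt (PosNum e0)).
Unshelve. all: by end_near.
Qed.

Lemma edense (R : realType) (r s : \bar R) : (r < s)%E -> exists a : R, (r < a%:E < s)%E.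
Proof.
case: r => [x||]; case: s => [y||] //=.
- rewrite lte_fin => xy; exists ((x + y) / 2); rewrite !lte_fin.
  apply/andP; split; lra.
- move=> _; exists (x + 1); rewrite lte_fin ltry andbT; lra.
- move=> _; exists (y - 1); rewrite lte_fin ltNyr /=; lra.
- by move=> _; exists 0; rewrite ltNyr ltry.
Qed.

Lemma lsc_freq (R : realType) n (g : 'rV[R]_n -> \bar R) (xs : nat -> 'rV[R]_n) xb r :
  lower_semicontinuous g -> freq xs xb ->
  (forall a : R, (r < a%:E)%E -> \forall k \near \oo, (g (xs k) < a%:E)%E) ->
  (g xb <= r)%E.
Proof.
move=> lg Fx Hr; rewrite leNgt; apply/negP => H.
have [a /andP [ra ag]] := edense H.
have [W Wx HW] := lg xb a ag.
have [N _ HN] := Hr a ra.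
have [k [Nk Wk]] := Fx W N Wx.
have := HN k Nk; have := HW _ Wk => /= h1 h2.
by have := lt_trans h1 h2; rewrite ltxx.
Qed.
Lemma fin_dom (R : realType) n (f : 'rV[R]_n -> \bar R) x :
  proper_fun f -> dom f x -> f x = (fine (f x))%:E.
Proof.
move=> [pf _]; rewrite /dom /=; have := pf x.
by case: (f x) => [r||] //=.
Qed.

Lemma lsc_fu (R : realType) n (f : 'rV[R]_n -> \bar R) u :
  lower_semicontinuous f -> lower_semicontinuous (fu f u).
Proof.
move=> lf x a; rewrite /fu => H.
set c := dotp u x.
have key : ((a + c)%:E < f x)%E.
  move: H; case: (f x) => [r||] //= H; last exact: ltry.
  by rewrite -EFinD lte_fin in H; rewrite lte_fin /c; lra.
have [b /andP [h1 h2]] := edense key.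
rewrite lte_fin in h1.
have [W Wx HW] := lf x b h2.
set eta := (b - (a + c)) / (n%:R * `|u| + 1).
have eta0 : 0 < eta by apply: divr_gt0; [lra | apply: ltr_pwDr => //; apply: mulr_ge0].
exists (W `&` ball x eta); first by apply: filterI => //; exact: nbhsx_ballx.
move=> y [Wy]; rewrite -ball_normE /= => xy.
have Hd : `|dotp u y - c| < b - (a + c).
  rewrite /c -dotpBr; apply: le_lt_trans (dotp_le _ _) _.
  have g1 : `|y - x| * (n%:R * `|u| + 1) < b - (a + c).
    by rewrite -ltr_pdivlMr ?ltr_pwDr ?mulr_ge0 // distrC.
  have g2 : 0 <= `|y - x| by [].
  rewrite mulrA; move: g1 g2; set p := n%:R * `|u|; set q := `|y - x|.
  move=> g1 g2; rewrite -/c; nra.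
have := HW y Wy; case: (f y) => [r||] //= Hr.
  rewrite -EFinD lte_fin; rewrite lte_fin in Hr; move: Hd; rewrite ltr_norml -/c; lra.
by rewrite addye // ltry.
Qed.

Lemma robust_small (R : realType) n (f : 'rV[R]_n -> \bar R) alpha :
  0 < alpha -> robustly_quasiconvex alpha f ->
  forall v : 'rV[R]_n, `|v| < alpha / (n%:R + 1) ->
    quasiconvex (fun x => f x + (dotp v x)%:E)%E.
Proof.
move=> a0 Hr v Hv; apply: Hr; rewrite /eball0 /=; apply: euc_lt => //.
have N0 : 0 <= (n%:R : R) by [].
have vn : 0 <= `|v| by [].
have h : `|v| * (n%:R + 1) < alpha by rewrite -ltr_pdivlMr // ltr_pwDr.
have h1 : (`|v| * (n%:R + 1)) ^+ 2 < alpha ^+ 2.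
  rewrite ltrXn2r // ?nnegrE ?ltW //; apply: mulr_ge0 => //; apply: addr_ge0.
have h2 : 0 <= `|v| ^+ 2 * (n%:R ^+ 2 + n%:R + 1) by apply: mulr_ge0; rewrite ?sqr_ge0 // !addr_ge0 ?sqr_ge0.
move: h1 h2; rewrite exprMn; set s := `|v| ^+ 2; set N : R := n%:R => h1 h2.
nra.
Qed.
Lemma near_tge (R : realType) (t : nat -> R) :
  (forall j, j.+1%:R <= t j) -> forall K : R, \forall j \near \oo, K <= t j.
Proof.
move=> tge K; have /cvgryPge /(_ K) [N _ HN] := @cvgr_idn R.
exists N => // j /= Nj; apply: le_trans (HN j Nj) _.
by apply: le_trans (tge j); rewrite ler_nat.
Qed.

Lemma ray (R : realType) n (f : 'rV[R]_n -> \bar R) (X : set 'rV[R]_n) alpha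
  (xs : nat -> 'rV[R]_n) (t : nat -> R) (d : 'rV[R]_n) :
  proper_fun f -> lower_semicontinuous f -> X `<=` dom f -> 0 < alpha ->
  robustly_quasiconvex alpha f ->
  (forall j, X (xs j)) -> (forall j, j.+1%:R <= t j) ->
  (forall j, (f (xs j) <= (t j / j.+1%:R)%:E)%E) ->
  (fun j => (t j)^-1 *: xs j) @ \oo --> d -> d != 0 ->
  forall y s, dom f y -> 0 < s -> (f (y + s *: d)%R <= f y)%E.
Proof.
move=> pf lf Xd a0 rq Xx tge fle cv d0 y s Dy s0.
have tpos : forall j, 0 < t j by move=> j; apply: lt_le_trans (tge j).
set fy := fine (f y); have Ey : f y = fy%:E := fin_dom pf Dy; rewrite Ey.
apply/lee_addgt0Pr => eps eps0.
set e := dotp d d; have e0 : 0 < e := dotp_self_gt0 d0.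
have nd0 : 0 < `|d| by rewrite normr_gt0.
set C := n%:R * `|d| + 1.
have C0 : 0 < C by rewrite ltr_pwDr // mulr_ge0.
have dotC : forall v, `|dotp d v| <= C * `|v|.
  move=> v; apply: le_trans (dotp_le _ _) _; rewrite mulrA.
  by apply: ler_wpM2r => //; rewrite /C lerDl.
set b0 := alpha / (n%:R + 1).
have b00 : 0 < b0 by rewrite /b0 divr_gt0 // ltr_pwDr.
set beta := Num.min (b0 / (2 * `|d|)) (eps / (2 * s * e)).
have beta0 : 0 < beta by rewrite lt_min !divr_gt0 // ?mulr_gt0.
have hb1 : beta <= b0 / (2 * `|d|) by rewrite /beta ge_min lexx.
have hb2 : beta <= eps / (2 * s * e) by rewrite /beta ge_min lexx orbT.
have hbd : `|(- beta) *: d| < b0.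
  rewrite normrZ normrN gtr0_norm //.
  have : beta * `|d| <= b0 / 2.
    by move: hb1; rewrite ler_pdivlMr ?mulr_gt0 // => h; rewrite ler_pdivlMr //; nra.
  lra.
have hbe : beta * (2 * s * e) <= eps by rewrite -ler_pdivlMr ?mulr_gt0.
have qc := robust_small a0 rq hbd.
set w := fun j => (t j)^-1 *: xs j.
set lam := fun j => s / t j.
set z := fun j => lam j *: xs j + (1 - lam j) *: y.
set qy := dotp d y.
have Exs : forall j, xs j = t j *: w j.
  by move=> j; rewrite /w scalerA mulfV ?scale1r // gt_eqF.
have Ez : forall j, z j = s *: w j + (y - lam j *: y).
  move=> j; rewrite /z {1}Exs scalerA /lam mulfVK ?gt_eqF //.
  by rewrite scalerBl scale1r.
have Edz : forall j, dotp d (z j) = s * dotp d (w j) + qy - lam j * qy.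
  by move=> j; rewrite Ez dotpDr dotpBr !dotpZr /qy; ring.
have zcv : z @ \oo --> y + s *: d.
  apply/cvgrPdist_lt => eta eta0.
  have H1 : \forall j \near \oo, `|d - w j| < eta / (2 * s).
    by move/cvgrPdist_lt : cv; apply; rewrite divr_gt0 ?mulr_gt0.
  have H2 := near_tge tge (2 * s * `|y| / eta + 1).
  near=> j.
  have h1 : `|d - w j| < eta / (2 * s) by near: j.
  have h2 : 2 * s * `|y| / eta + 1 <= t j by near: j.
  rewrite Ez.
  have -> : y + s *: d - (s *: w j + (y - lam j *: y)) = s *: (d - w j) + lam j *: y.
    by apply/rowP => i; rewrite !mxE; ring.
  apply: le_lt_trans (ler_normD _ _) _.
  rewrite !normrZ (gtr0_norm s0) (@gtr0_norm _ (t j)^-1); last by rewrite invr_gt0.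
  have k1 : s * `|d - w j| < eta / 2.
    by move: h1; rewrite ltr_pdivlMr ?mulr_gt0 // => h; rewrite ltr_pdivlMr //; nra.
  have k2 : s * (t j)^-1 * `|y| < eta / 2.
    rewrite mulrAC ltr_pdivrMr ?tpos //.
    move: h2; rewrite -lerBrDr => h2.
    have : 2 * s * `|y| / eta < t j by lra.
    rewrite ltr_pdivrMr // => h3.
    have : 0 <= `|y| by []. have := tpos j. nra.
  lra.
have Hmain : \forall j \near \oo, (f (z j) <= (fy + eps)%:E)%E.
  have H1 : \forall j \near \oo, `|d - w j| < e / (2 * C).
    by move/cvgrPdist_lt : cv; apply; rewrite divr_gt0 ?mulr_gt0.
  have H3 := near_infty_natSinv_lt (PosNum (divr_gt0 (mulr_gt0 beta0 e0) (ltr0n R 4))).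
  set K1 := 4 * `|fy - beta * qy| / (beta * e).
  set K2 := 2 * `|qy| / e.
  have H4 := near_tge tge (K1 + K2 + s).
  near=> j.
  have h1 : `|d - w j| < e / (2 * C) by near: j.
  have h3 : j.+1%:R^-1 < beta * e / 4 by near: j.
  have h4 : K1 + K2 + s <= t j by near: j.
  have tj0 := tpos j.
  have dw : `|dotp d (w j) - e| < e / 2.
    rewrite /e -dotpBr; apply: le_lt_trans (dotC _) _.
    rewrite distrC; move: h1; rewrite ltr_pdivlMr ?mulr_gt0 // => h.
    by rewrite mulrC -/e; lra.
  move: dw; rewrite ltr_norml => /andP [dwlo dwhi].
  have K1ge : 0 <= K1 by rewrite /K1 divr_ge0 ?mulr_ge0 // ltW // mulr_gt0.
  have K2ge : 0 <= K2 by rewrite /K2 divr_ge0 ?mulr_ge0 // ltW.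
  have Dx : dom f (xs j) := Xd _ (Xx j).
  set fx := fine (f (xs j)); have Ex : f (xs j) = fx%:E := fin_dom pf Dx.
  have hfx : fx <= t j / j.+1%:R by rewrite -lee_fin -Ex.
  have lam01 : 0 <= lam j <= 1.
    apply/andP; split; first by rewrite /lam divr_ge0 // ltW.
    rewrite /lam ler_pdivrMr // mul1r; lra.
  have domg : forall v, dom f v -> dom (fun x => f x + (dotp ((- beta) *: d) x)%:E)%E v.
    by move=> v Dv; rewrite /dom /= (fin_dom pf Dv) -EFinD ltry.
  have Q := qc (xs j) y (lam j) (domg _ Dx) (domg _ Dy) lam01.
  rewrite Ex Ey !dotpZl -!EFinD in Q.
  have gx_le : fx + - beta * dotp d (xs j) <= fy + - beta * qy.
    have Exd : dotp d (xs j) = t j * dotp d (w j) by rewrite {1}Exs dotpZr.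
    rewrite Exd.
    have f1 : t j * j.+1%:R^-1 <= t j * (beta * e / 4).
      by apply: ler_wpM2l; apply: ltW.
    have f2 : t j * (beta * e / 2) <= beta * (t j * dotp d (w j)).
      have bt := mulr_gt0 beta0 tj0; nra.
    have f3 : `|fy - beta * qy| <= t j * (beta * e / 4).
      have : K1 <= t j by lra.
      rewrite /K1 ler_pdivrMr ?mulr_gt0 // => h; lra.
    have f5 : - (t j * (beta * e / 4)) <= fy - beta * qy.
      by move: f3; rewrite ler_norml => /andP [].
    move: hfx f1 f2 f5; set T := t j * (beta * e / 4); set T2 := t j * (beta * e / 2).
    have -> : T2 = 2 * T by rewrite /T2 /T; field.
    rewrite !mulNr; set U := beta * (t j * dotp d (w j)).
    move=> k1 k2 k3 k4.
    have k5 : fx <= T by apply: le_trans k1 k2.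
    have k6 : fx - U <= - T by lra.
    lra.
  rewrite max_r ?lee_fin // in Q.
  move: Q; rewrite -/(z j); case: (f (z j)) => [r||] Q; last by rewrite leNye.
    rewrite -EFinD lee_fin in Q; rewrite lee_fin.
    rewrite Edz in Q.
    have g1 : lam j * `|qy| <= s * e / 2.
      have : K2 <= t j by lra.
      rewrite /K2 ler_pdivrMr // => h.
      rewrite /lam mulrAC ler_pdivrMr //; nra.
    have g0 : - (lam j * `|qy|) <= lam j * qy.
      rewrite -mulrN; apply: ler_wpM2l; first by case/andP: lam01.
      by rewrite lerNl -normrN; apply: ler_norm.
    have g2 : beta * (s * dotp d (w j) - lam j * qy) <= beta * (2 * s * e).
      apply: ler_wpM2l; first exact: ltW.
      have : s * dotp d (w j) <= s * (e + e / 2) by rewrite ler_pM2l //; lra.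
      lra.
    have E : - beta * (s * dotp d (w j) + qy - lam j * qy) =
      - (beta * (s * dotp d (w j) - lam j * qy)) - beta * qy by ring.
    rewrite E -/qy !mulNr in Q.
    move: Q g2 hbe; set B := beta * (s * dotp d (w j) - lam j * qy).
    set B2 := beta * (2 * s * e); set B3 := beta * qy => k1 k2 k3.
    lra.
  by move: Q; rewrite addye.
apply: (lsc_freq lf (cvg_freq zcv)) => a Ha.
near=> j.
apply: le_lt_trans Ha.
by near: j.
Unshelve. all: by end_near.
Qed.
Lemma closed_nball (R : realType) n (r : R) : 0 < r ->
  closed [set v : 'rV[R]_n | `|v| <= r].
Proof.
move=> r0; have := @closed_ball_closed _ _ (0 : 'rV[R]_n) r.
rewrite closed_ballE //.
suff -> : [set v : 'rV[R]_n | `|v| <= r] = closed_ball_ Num.Def.normr (0 : 'rV[R]_n) r by [].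
by apply/seteqP; split => v; rewrite /closed_ball_ /= sub0r normrN.
Qed.

Lemma bnd_set (R : realType) n (A : set 'rV[R]_n) (B : R) :
  (forall v, A v -> `|v| <= B) -> bounded_set A.
Proof.
move=> HA; exists B; split; first exact: num_real.
by move=> M BM v Av; apply: le_trans (HA v Av) (ltW BM).
Qed.

Lemma core (R : realType) n (f : 'rV[R]_n -> \bar R) (X : set 'rV[R]_n) alpha :
  proper_fun f -> lower_semicontinuous f -> X `<=` dom f -> 0 < alpha ->
  robustly_quasiconvex alpha f -> asymp_cone X `&` Kq f = [set 0] ->
  exists delta : R, 0 < delta /\ exists R0 : R,
    forall x, X x -> R0 <= `|x| -> ((delta * `|x|)%:E < f x)%E.
Proof.
move=> pf lf Xd a0 rq HK; apply: contrapT => H.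
have Hk : forall k : nat, exists x, X x /\ k.+1%:R <= `|x| /\
    (f x <= (`|x| / k.+1%:R)%:E)%E.
  move=> k; apply: contrapT => Hk; apply: H.
  exists (k.+1%:R^-1); split; first by rewrite invr_gt0.
  exists k.+1%:R => x Xx Hx; rewrite ltNge; apply/negP => Hle.
  by apply: Hk; exists x; split => //; split => //; rewrite mulrC.
have [xs Hxs] := choice Hk.
have xpos : forall k, 0 < `|xs k|.
  by move=> k; apply: lt_le_trans (Hxs k).2.1.
set w := fun k => (`|xs k|)^-1 *: xs k.
have w1 : forall k, `|w k| = 1.
  by move=> k; rewrite /w normrZ ger0_norm ?invr_ge0 // mulVf // gt_eqF.
have cS : compact [set v : 'rV[R]_n | `|v| <= 1].
  apply: bounded_closed_compact; last exact: closed_nball.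
  by apply: (@bnd_set _ _ _ 1) => v.
have [d [_ Cd]] := compact_clust (w := w) cS (fun k => ltac:(by rewrite /= w1)).
have Fd := cluster_freq Cd.
have d0 : d != 0.
  apply/eqP => d0; subst d.
  have hb : nbhs (0 : 'rV[R]_n) (ball 0 (2^-1 : R)) by apply: nbhsx_ballx; rewrite invr_gt0.
  have [k [_ Bk]] := Fd _ 0%N hb.
  move: Bk; rewrite -ball_normE /= sub0r normrN w1; lra.
have [phi [phige cvphi]] := freq_subseq Fd.
set xs' := fun j => xs (phi j).
set t' := fun j => `|xs' j|.
have tge : forall j, j.+1%:R <= t' j.
  move=> j; apply: le_trans (Hxs (phi j)).2.1; by rewrite ler_nat ltnS.
have fle : forall j, (f (xs' j) <= (t' j / j.+1%:R)%:E)%E.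
  move=> j; apply: le_trans (Hxs (phi j)).2.2 _; rewrite lee_fin.
  apply: ler_wpM2l => //; rewrite lef_pV2 ?posrE // ler_nat ltnS //.
have cv : (fun j => (t' j)^-1 *: xs' j) @ \oo --> d by exact: cvphi.
have Xx : forall j, X (xs' j) by move=> j; exact: (Hxs (phi j)).1.
have Hray := ray pf lf Xd a0 rq Xx tge fle cv d0.
have : (asymp_cone X `&` Kq f) d.
  split.
    exists t', xs'; split; last by split.
    apply/cvgryPge => K; exact: near_tge.
  rewrite /Kq /qasymp /=; apply: ge_ereal_sup => z [x [t [Dx [t0 ->]]]].
  apply: mule_le0_ge0; last by rewrite lee_fin invr_ge0 ltW.
  by rewrite sube_le0; apply: Hray.
by rewrite HK => /= /eqP; rewrite (negbTE d0).
Qed.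
Lemma closed_le (R : realType) n (g : 'rV[R]_n -> \bar R) (c : R) :
  lower_semicontinuous g -> closed [set x | (g x <= c%:E)%E].
Proof.
move=> lg; have := (lower_semicontinuousP g).1 lg c => /open_closedC.
suff -> : ~` [set x | (c%:E < g x)%E] = [set x | (g x <= c%:E)%E] by [].
apply/seteqP; split => x /=.
  by move=> /negP; rewrite -leNgt.
by move=> h /=; apply/negP; rewrite -leNgt.
Qed.

Lemma keyC (R : realType) n (f : 'rV[R]_n -> \bar R) (X : set 'rV[R]_n)
  (us xs : nat -> 'rV[R]_n) xb (B : R) :
  proper_fun f -> lower_semicontinuous f -> X `<=` dom f ->
  (forall k, Sol f X (us k) (xs k)) -> us @ \oo --> (0 : 'rV[R]_n) ->
  (\forall k \near \oo, `|xs k| <= B) -> freq xs xb -> X xb -> Sol f X 0 xb.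
Proof.
move=> pf lf Xd HS cu HB Fx Xb; split => // y Xy.
rewrite /fu !dotp0l !sube0.
apply: (lsc_freq lf Fx) => a Ha.
set fy := fine (f y); have Ey : f y = fy%:E := fin_dom pf (Xd _ Xy).
rewrite Ey lte_fin in Ha.
set P := `|B| + `|y|.
set eta := (a - fy) / (n%:R * P + 1).
have P0 : 0 <= P by rewrite addr_ge0.
have eta0 : 0 < eta by apply: divr_gt0; [lra | apply: ltr_pwDr => //; apply: mulr_ge0].
have Hu : \forall k \near \oo, `|us k| < eta.
  move/cvgrPdist_lt : cu => /(_ eta eta0); apply: filterS => k.
  by rewrite sub0r normrN.
near=> k.
have hu : `|us k| < eta by near: k.
have hb : `|xs k| <= B by near: k.
have [Xk Hk] := HS k.
have := Hk y Xy; rewrite /fu Ey.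
set fx := fine (f (xs k)); have Ex : f (xs k) = fx%:E := fin_dom pf (Xd _ Xk).
rewrite Ex -!EFinD !lee_fin lte_fin => h.
have h1 : dotp (us k) (xs k) - dotp (us k) y <= n%:R * (`|us k| * P).
  rewrite -dotpBr; apply: le_trans (ler_norm _) _; apply: le_trans (dotp_le _ _) _.
  apply: ler_wpM2l => //; apply: ler_wpM2l => //.
  apply: le_trans (ler_normB _ _) _; apply: lerD => //.
  by apply: le_trans hb _; apply: ler_norm.
have h2 : n%:R * (`|us k| * P) <= eta * (n%:R * P).
  have g1 := ltW hu; have g2 : 0 <= n%:R * P by apply: mulr_ge0.
  move: g1 g2; set N := n%:R * P; rewrite mulrCA -/N => g1 g2; nra.
have h3 : eta * (n%:R * P + 1) = a - fy by rewrite /eta mulfVK // gt_eqF // ltr_pwDr ?mulr_ge0.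
have h4 : eta * (n%:R * P) < a - fy by rewrite -h3 ltr_pM2l // ltrDl.
lra.
Unshelve. all: by end_near.
Qed.
Theorem mainTheorem11 (R : realType) (n : nat)
  (f : 'rV[R]_n -> \bar R) (X : set 'rV[R]_n) (alpha : R) :
  proper_fun f -> lower_semicontinuous f ->
  X !=set0 -> closed X -> ~ bounded_eset (dom f `&` X) ->
  cvx_set X -> 0 < alpha -> robustly_quasiconvex alpha f ->
  X `<=` dom f ->
  asymp_cone X `&` Kq f = [set 0] ->
  exists eps : R, 0 < eps /\
    (forall u, eball0 eps u ->
       (exists m : R, forall x, X x -> (m%:E <= fu f u x)%E) /\
       Sol f X u !=set0 /\ compact (Sol f X u)) /\
    limsup_Sol0 f X `<=` Sol f X 0 /\
    usc_at (Sol f X) 0.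
Proof.
move=> pf lf [x0 Xx0] Xcl _ _ a0 rq Xd HK.
have [delta [del0 [R0 HR0]]] := core pf lf Xd a0 rq HK.
set N : R := n%:R.
set eps := delta / (2 * (N + 1)).
have N0 : 0 <= N by [].
have eps0 : 0 < eps by rewrite divr_gt0 // mulr_gt0 // ltr_pwDr.
have epsE : eps * (2 * (N + 1)) = delta by rewrite /eps mulfVK // gt_eqF // mulr_gt0 // ltr_pwDr.
have Nu : forall u : 'rV[R]_n, `|u| < eps -> N * `|u| <= delta / 2.
  move=> u hu; have : N * `|u| <= N * eps by apply: ler_wpM2l => //; exact: ltW.
  move: epsE; set NE := N * eps => E h; have : NE * 2 + eps * 2 = delta.
    by rewrite -E /NE; ring.
  lra.
have dotb : forall u x : 'rV[R]_n, `|u| < eps -> `|dotp u x| <= delta / 2 * `|x|.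
  move=> u x hu; apply: le_trans (dotp_le _ _) _; rewrite mulrA.
  by apply: ler_wpM2r => //; exact: Nu.
have finfu : forall u x : 'rV[R]_n, X x -> fu f u x = (fine (f x) - dotp u x)%:E.
  by move=> u x Xx; rewrite /fu (fin_dom pf (Xd _ Xx)) -EFinD.
set F0 := fine (f x0).
set M0 := F0 + delta / 2 * `|x0|.
have fu0 : forall u : 'rV[R]_n, `|u| < eps -> (fu f u x0 <= M0%:E)%E.
  move=> u hu; rewrite finfu // lee_fin /M0.
  have := dotb u x0 hu; rewrite ler_norml -/F0 => /andP [h _]; lra.
set R2 := Num.max (Num.max R0 (2 * `|M0| / delta)) 1.
have R2pos : 0 < R2 by rewrite /R2 lt_max ltr01 orbT.
have Hb : forall u x : 'rV[R]_n, `|u| < eps -> X x -> (fu f u x <= fu f u x0)%E -> `|x| <= R2.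
  move=> u x hu Xx hle; rewrite leNgt; apply/negP => hx.
  have hR0 : R0 <= `|x|.
    by apply: ltW; apply: le_lt_trans hx; rewrite /R2 !le_max lexx.
  have hM : 2 * `|M0| / delta < `|x|.
    by apply: le_lt_trans hx; rewrite /R2 !le_max lexx orbT.
  have := HR0 x Xx hR0; rewrite (fin_dom pf (Xd _ Xx)) lte_fin => h1.
  have := le_trans hle (fu0 u hu); rewrite finfu // lee_fin => h2.
  have := dotb u x hu; rewrite ler_norml => /andP [h3 h4].
  move: hM; rewrite ltr_pdivrMr // => h5.
  have : M0 <= `|M0| by apply: ler_norm.
  lra.
set K := X `&` [set v | `|v| <= R2].
have cK : compact K.
  apply: bounded_closed_compact; first by apply: (@bnd_set _ _ _ R2) => v [].
  apply: closedI => //; exact: closed_nball.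
have x0K : forall u : 'rV[R]_n, `|u| < eps -> K x0 by move=> u hu; split => //=; apply: (Hb u x0 hu Xx0).
have minim : forall u : 'rV[R]_n, `|u| < eps -> exists xb, Sol f X u xb.
  move=> u hu.
  have [m [mle [mlb mapx]]] : exists m : \bar R, (m <= fu f u x0)%E /\
      (forall y, X y -> (m <= fu f u y)%E) /\
      (forall e, (m < e)%E -> exists x, X x /\ (fu f u x < e)%E).
    exists (ereal_inf [set fu f u x | x in X]); split.
      by apply: ge_ereal_inf; exists (fu f u x0) => //; exists x0.
    split; first by move=> y Xy; apply: ge_ereal_inf; exists (fu f u y) => //; exists y.
    by move=> e /ereal_inf_lt [z [x Xx <-] hz]; exists x.
  have toK : forall e, (m < e)%E -> exists x, K x /\ (fu f u x < e)%E.
    move=> e /mapx [x [Xx hx]].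
    have [h|h] := leP (fu f u x) (fu f u x0).
      by exists x; split => //; split => //=; exact: (Hb u x hu Xx h).
    by exists x0; split; [exact: (x0K u hu) | exact: lt_trans h hx].
  have [tk [tk1 tk2]] : exists tk : nat -> \bar R, (forall k, (m < tk k)%E) /\
      (forall a : R, (m < a%:E)%E -> \forall k \near \oo, (tk k <= a%:E)%E).
    move: mle mlb mapx toK; case: m => [r||] mle mlb mapx toK.
    - exists (fun k => (r + k.+1%:R^-1)%:E); split.
        by move=> k; rewrite lte_fin ltrDl invr_gt0.
      move=> a; rewrite lte_fin => ra.
      have ar0 : 0 < a - r by lra.
      near=> k.
      have h : k.+1%:R^-1 < a - r by near: k; exact: (near_infty_natSinv_lt (PosNum ar0)).
      rewrite lee_fin; apply: ltW; by rewrite -ltrBrDl.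
    - by move: mle; rewrite finfu.
    - exists (fun k => (- k%:R)%:E); split; first by move=> k; rewrite ltNyr.
      move=> a _.
      have /cvgryPge /(_ (- a)) [N1 _ HN] := @cvgr_idn R.
      exists N1 => // k /= Nk; rewrite lee_fin lerNl; exact: HN.
  have Hx : forall k, exists x, K x /\ (fu f u x < tk k)%E by move=> k; exact: toK.
  have [xs Hxs] := choice Hx.
  have [xb [Kb Cb]] := compact_clust cK (fun k => (Hxs k).1).
  have hxb : (fu f u xb <= m)%E.
    apply: (lsc_freq (@lsc_fu _ _ f u lf) (cluster_freq Cb)) => a ha.
    have := tk2 a ha; apply: filterS => k hk.
    exact: lt_le_trans (Hxs k).2 hk.
  exists xb; split; first exact: Kb.1.
  by move=> y Xy; apply: le_trans hxb (mlb y Xy).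
exists eps; split => //; split.
  move=> u hu_e; have hu : `|u| < eps := le_lt_trans (norm_le_euc u) hu_e.
  have [xb [Xb Sb]] := minim u hu.
  split.
    by exists (fine (f xb) - dotp u xb) => x Xx; rewrite -finfu //; exact: Sb.
  split; first by exists xb.
  apply: (subclosed_compact _ cK).
    have -> : Sol f X u = X `&` [set x | (fu f u x <= (fine (f xb) - dotp u xb)%:E)%E].
      apply/seteqP; split => x.
        by move=> [Xx Hx]; split => //=; rewrite -finfu //; exact: Hx xb Xb.
      move=> [Xx Hx]; split => // y Xy; rewrite /= -finfu // in Hx.
      exact: le_trans Hx (Sb y Xy).
    apply: closedI => //; exact: closed_le (@lsc_fu _ _ f u lf).
  by move=> x [Xx Hx]; split => //=; exact: (Hb u x hu Xx (Hx x0 Xx0)).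
split.
  move=> xb [us [xs [cu [HS cx]]]].
  have Xb : X xb.
    apply: (closed_cvg _ Xcl _ _ cx); exists 0%N => // k _; exact: (HS k).1.
  apply: (keyC (B := `|xb| + 1) pf lf Xd HS cu _ (cvg_freq cx) Xb).
  move/cvgrPdist_lt : cx => /(_ 1 ltr01); apply: filterS => k hk.
  rewrite -(subKr xb (xs k)); apply: le_trans (ler_normB _ _) _; lra.
move=> W oW hW; apply: contrapT => Hn.
have Hk : forall k : nat, exists u : 'rV[R]_n, `|u| < Num.min eps k.+1%:R^-1 /\
    exists x, Sol f X u x /\ ~ W x.
  move=> k; apply: contrapT => Hk; apply: Hn; apply/nbhs_ballP.
  have ek0 : 0 < Num.min eps k.+1%:R^-1 by rewrite lt_min; apply/andP; split.
  exists (Num.min eps k.+1%:R^-1) => //.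
  move=> u; rewrite -ball_normE /= sub0r normrN => hu x Sx.
  by apply: contrapT => nW; apply: Hk; exists u; split => //; exists x; split.
have [us Hus] := choice Hk.
have Hx : forall k, exists x, Sol f X (us k) x /\ ~ W x by move=> k; exact: (Hus k).2.
have [xs Hxs] := choice Hx.
have hus : forall k, `|us k| < eps.
  by move=> k; have := (Hus k).1; rewrite lt_min => /andP [].
have Kx : forall k, K (xs k).
  move=> k; have [Xk Sk] := (Hxs k).1; split => //=.
  exact: (Hb (us k) (xs k) (hus k) Xk (Sk x0 Xx0)).
have [xb [Kb Cb]] := compact_clust cK Kx.
have cu : us @ \oo --> (0 : 'rV[R]_n).
  apply/cvgrPdist_lt => e e0; near=> k; rewrite sub0r normrN.
  have h1 : `|us k| < k.+1%:R^-1 by have := (Hus k).1; rewrite lt_min => /andP [].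
  apply: lt_trans h1 _; near: k; exact: (near_infty_natSinv_lt (PosNum e0)).
have Sb := keyC (B := R2) pf lf Xd (fun k => (Hxs k).1) cu
  (ltac:(by exists 0%N => // k _; case: (Kx k))) (cluster_freq Cb) Kb.1.
have nW : nbhs xb W by apply: open_nbhs_nbhs; split => //; exact: hW.
have Fb := cluster_freq Cb; have [k [_ Wk]] := Fb _ 0%N nW.
exact: (Hxs k).2 Wk.
Unshelve. all: by end_near.
Qed.
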